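(* Let $\alpha$ be a unit-speed curve in $\mathbb{R}^3$ with nonvanishing curvature, let $\alpha_T$ be its tangent indicatrix, and let $\beta$ be an evolute-direction curve of $\alpha_T$ (an $X$-direction curve of $\alpha_T$ with $N_\beta=T_T$). Then: (i) $\alpha_T$ is a circle or a part of a circle on the unit sphere if and only if $\beta$ is a helix; (ii) $\alpha_T$ is a spherical helix if and only if $\beta$ is a slant helix.
   Context: Let $\alpha:I\subset\mathbb{R}\to\mathbb{R}^3$ be a unit-speed curve with curvature $\kappa>0$, torsion $\tau$ and Frenet frame $\{T,N,B\}$. The tangent indicatrix of $\alpha$ is the curve $\alpha_T=T$ on the unit sphere. Its arc length is $s_T=\int\kappa\,ds$. Its Frenet apparatus is $\{T_T,N_T,B_T,\kappa_T,\tau_T\}$, with $\frac{dT_T}{ds_T}=\kappa_TN_T$, $\frac{dN_T}{ds_T}=-\kappa_TT_T+\tau_TB_T$ and $\frac{dB_T}{ds_T}=-\tau_TN_T$. Let $x,y,z$ be real functions of $s_T$ with $x^2+y^2+z^2=1$, and set $X=xT_T+yN_T+zB_T$. An integral curve $\beta$ of $X$, meaning $d\beta/ds_T=X$, is an $X$-direction curve of $\alpha_T$. It is regarded as a unit-speed Frenet curve with frame $\{T_\beta=X,N_\beta,B_\beta\}$, curvature $\kappa_\beta>0$ and torsion $\tau_\beta$. $\beta$ is an evolute-direction curve of $\alpha_T$ if $N_\beta=T_T$. A curve with curvature $k>0$ and torsion $t$ is a (general) helix if its unit tangent makes a constant angle with a fixed line; equivalently, $t/k$ is constant. It is a slant helix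 if its principal normal makes a constant angle with a fixed line; equivalently, $\frac{k^2}{(k^2+t^2)^{3/2}}\,(t/k)'$ is constant, where $'$ is the derivative with respect to arc length. A spherical helix is a helix lying on a sphere. *)

(* Defs.v *)
From Stdlib Require Import Reals.
From Coquelicot Require Import Coquelicot.
Open Scope R_scope.

Definition V3 : Type := (R * R * R)%type.
Definition vx (v : V3) : R := fst (fst v).
Definition vy (v : V3) : R := snd (fst v).
Definition vz (v : V3) : R := snd v.
Definition vadd (u v : V3) : V3 := (vx u + vx v, vy u + vy v, vz u + vz v).
Definition vsub (u v : V3) : V3 := (vx u - vx v, vy u - vy v, vz u - vz v).
Definition vscale (a : R) (v : V3) : V3 := (a * vx v, a * vy v, a * vz v).
Definition vdot (u v : V3) : R := vx u * vx v + vy u * vy v + vz u * vz v.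
Definition vcross (u v : V3) : V3 :=
  (vy u * vz v - vz u * vy v, vz u * vx v - vx u * vz v, vx u * vy v - vy u * vx v).
Definition vnorm (v : V3) : R := sqrt (vdot v v).

Definition vderiv (f f' : R -> V3) (t : R) : Prop :=
  is_derive (fun s => vx (f s)) t (vx (f' t)) /\
  is_derive (fun s => vy (f s)) t (vy (f' t)) /\
  is_derive (fun s => vz (f s)) t (vz (f' t)).

Definition in_open (a b : Rbar) (t : R) : Prop := Rbar_lt a t /\ Rbar_lt t b.

Definition frenet_curve (a b : Rbar) (c T N B : R -> V3) (k t : R -> R) : Prop :=
  forall s, in_open a b s ->
    vderiv c T s /\
    vderiv T (fun u => vscale (k u) (N u)) s /\
    vderiv N (fun u => vadd (vscale (- k u) (T u)) (vscale (t u) (B u))) s /\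
    vderiv B (fun u => vscale (- t u) (N u)) s /\
    vdot (T s) (T s) = 1 /\ vdot (N s) (N s) = 1 /\ vdot (B s) (B s) = 1 /\
    vdot (T s) (N s) = 0 /\ vdot (T s) (B s) = 0 /\ vdot (N s) (B s) = 0 /\
    B s = vcross (T s) (N s) /\
    0 < k s.

Definition is_helix (a b : Rbar) (T : R -> V3) : Prop :=
  exists d : V3, vnorm d = 1 /\ exists c0 : R,
    forall s, in_open a b s -> vdot (T s) d = c0.

Definition is_slant_helix (a b : Rbar) (N : R -> V3) : Prop :=
  exists d : V3, vnorm d = 1 /\ exists c0 : R,
    forall s, in_open a b s -> vdot (N s) d = c0.

Definition is_spherical_helix (a b : Rbar) (c T : R -> V3) : Prop :=
  is_helix a b T /\
  exists (p : V3) (r : R), 0 < r /\ forall s, in_open a b s -> vnorm (vsub (c s) p) = r.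

Definition is_part_of_circle (a b : Rbar) (c : R -> V3) : Prop :=
  exists (p n : V3) (r : R), 0 < r /\ vnorm n = 1 /\
    forall s, in_open a b s ->
      vnorm (vsub (c s) p) = r /\ vdot (vsub (c s) p) n = 0.

(* Main.v *)
Require Import Defs.
From Stdlib Require Import Reals Lra Psatz Classical.
From Coquelicot Require Import Coquelicot.
Open Scope R_scope.

Lemma derive_mulc (g : R -> R) t l c : is_derive g t l -> is_derive (fun s => g s * c) t (l * c).
Proof.
  intros H. apply (is_derive_ext (fun s => c * g s)).
  { intros; simpl; ring. }
  rewrite Rmult_comm. apply is_derive_scal. exact H.
Qed.

Lemma derive_add (g h : R -> R) t l m : is_derive g t l -> is_derive h t m -> is_derive (fun s => g s + h s) t (l + m).
Proof. intros. exact (is_derive_plus g h t l m H H0). Qed.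

Lemma deriv_dot (f f' : R -> V3) (d : V3) t :
  vderiv f f' t -> is_derive (fun s => vdot (f s) d) t (vdot (f' t) d).
Proof.
  intros [H1 [H2 H3]]. unfold vdot.
  apply derive_add; [apply derive_add|]; apply derive_mulc; assumption.
Qed.

Lemma in_open_loc a b u : in_open a b u -> locally u (in_open a b).
Proof.
  intros [Ha Hb].
  pose proof (open_Rbar_lt' (Finite u) b Hb) as L1.
  pose proof (open_Rbar_gt' (Finite u) a Ha) as L2.
  simpl in L1, L2.
  generalize (filter_and _ _ L2 L1). apply filter_imp. intros x [h1 h2]; split; auto.
Qed.

Lemma const_deriv0 a b (g : R -> R) c u l :
  in_open a b u -> (forall v, in_open a b v -> g v = c) -> is_derive g u l -> l = 0.
Proof.
  intros Hu Hc Hd.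
  rewrite <- (is_derive_unique _ _ _ Hd).
  rewrite (Derive_ext_loc g (fun _ => c)). apply Derive_const.
  generalize (in_open_loc a b u Hu). apply filter_imp. auto.
Qed.

Lemma in_open_between a b u v w : in_open a b u -> in_open a b v -> u <= w <= v -> in_open a b w.
Proof.
  intros [H1 H2] [H3 H4] [H5 H6]. split.
  - destruct a; simpl in *; auto; lra.
  - destruct b; simpl in *; auto; lra.
Qed.

Lemma zero_deriv_const a b (g : R -> R) :
  (forall u, in_open a b u -> is_derive g u 0) ->
  forall u v, in_open a b u -> in_open a b v -> g u = g v.
Proof.
  intros Hd.
  assert (K : forall u v, u <= v -> in_open a b u -> in_open a b v -> g u = g v).
  { intros u v Huv Hu Hv.
    destruct (MVT_gen g u v (fun _ => 0)) as [c [_ Hc]].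
    - intros x Hx. apply Hd. apply (in_open_between a b u v x Hu Hv).
      rewrite Rmin_left in Hx by lra. rewrite Rmax_right in Hx by lra. lra.
    - intros x Hx. apply continuity_pt_filterlim. apply (ex_derive_continuous (K:=R_AbsRing) (V:=R_NormedModule)).
      exists 0. apply Hd. apply (in_open_between a b u v x Hu Hv).
      rewrite Rmin_left in Hx by lra. rewrite Rmax_right in Hx by lra. lra.
    - lra. }
  intros u v Hu Hv. destruct (Rle_dec u v).
  - apply K; auto.
  - symmetry. apply K; auto; lra.
Qed.

Lemma vdot_scale k v n : vdot (vscale k v) n = k * vdot v n.
Proof. unfold vdot, vscale, vx, vy, vz; simpl; ring. Qed.

Lemma vdot_sub_expand a c d : vdot (vsub a (vscale c d)) (vsub a (vscale c d)) =
  vdot a a - 2 * c * vdot a d + c * c * vdot d d.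
Proof. unfold vdot, vsub, vscale, vx, vy, vz; simpl; ring. Qed.

Lemma vdot_sub_l a p n : vdot (vsub a p) n = vdot a n - vdot p n.
Proof. unfold vdot, vsub, vx, vy, vz; simpl; ring. Qed.

Lemma vnorm1 d : vnorm d = 1 -> vdot d d = 1.
Proof.
  unfold vnorm. intros H.
  assert (0 <= vdot d d) by (unfold vdot; nra).
  rewrite <- (sqrt_sqrt (vdot d d)) by auto. rewrite H; ring.
Qed.

Theorem theorem4p5

  (* the curve alpha on I = (a,b), with its Frenet apparatus *)
  (a b : Rbar) (alpha T N B : R -> V3) (kappa tau : R -> R)
  (Halpha : frenet_curve a b alpha T N B kappa tau)
  (* arc length s_T = sigma(s) of the tangent indicatrix, sigma' = kappa,
     mapping I onto J = (aT,bT) *)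
  (sigma : R -> R) (aT bT : Rbar)
  (Hsigma_der : forall s, in_open a b s -> is_derive sigma s (kappa s))
  (Hsigma_in : forall s, in_open a b s -> in_open aT bT (sigma s))
  (Hsigma_onto : forall u, in_open aT bT u -> exists s, in_open a b s /\ sigma s = u)
  (* the tangent indicatrix alpha_T, parametrized by s_T, with its Frenet apparatus *)
  (alphaT TT NT BT : R -> V3) (kappaT tauT : R -> R)
  (HalphaT_def : forall s, in_open a b s -> alphaT (sigma s) = T s)
  (HalphaT : frenet_curve aT bT alphaT TT NT BT kappaT tauT)
  (* the X-direction curve beta, X = x T_T + y N_T + z B_T *)
  (x y z : R -> R)
  (Hxyz : forall u, in_open aT bT u -> x u ^ 2 + y u ^ 2 + z u ^ 2 = 1)
  (beta Nbeta Bbeta : R -> V3) (kappabeta taubeta : R -> R)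
  (Hbeta : frenet_curve aT bT beta
             (fun u => vadd (vscale (x u) (TT u))
                         (vadd (vscale (y u) (NT u)) (vscale (z u) (BT u))))
             Nbeta Bbeta kappabeta taubeta)
  (* evolute-direction curve: N_beta = T_T *)
  (Hevol : forall u, in_open aT bT u -> Nbeta u = TT u) :
  (is_part_of_circle aT bT alphaT <->
     is_helix aT bT (fun u => vadd (vscale (x u) (TT u))
                         (vadd (vscale (y u) (NT u)) (vscale (z u) (BT u))))) /\
  (is_spherical_helix aT bT alphaT TT <-> is_slant_helix aT bT Nbeta).
Proof.
  assert (Hsph : forall u, in_open aT bT u -> vdot (alphaT u) (alphaT u) = 1).
  { intros u Hu. destruct (Hsigma_onto u Hu) as [s [Hs <-]].
    rewrite (HalphaT_def s Hs). destruct (Halpha s Hs) as (_&_&_&_&H&_). exact H. }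
  set (X := fun u => vadd (vscale (x u) (TT u)) (vadd (vscale (y u) (NT u)) (vscale (z u) (BT u)))).
  fold X.
  split.
  - split.
    + intros (p & n & r & Hr & Hn & Hc).
      assert (HTn : forall u, in_open aT bT u -> vdot (TT u) n = 0).
      { intros u Hu. destruct (HalphaT u Hu) as (D1&_).
        apply (const_deriv0 aT bT (fun v => vdot (alphaT v) n) (vdot p n) u _ Hu).
        - intros v Hv. destruct (Hc v Hv) as [_ H]. rewrite vdot_sub_l in H. lra.
        - apply deriv_dot; exact D1. }
      exists n. split; [exact Hn|].
      destruct (classic (exists u0, in_open aT bT u0)) as [[u0 Hu0]|Hno].
      * exists (vdot (X u0) n). intros s Hs.
        apply (zero_deriv_const aT bT (fun v => vdot (X v) n)); auto.
        intros u Hu. destruct (Hbeta u Hu) as (_&D2&_).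
        pose proof (deriv_dot _ _ n u D2) as H. simpl in H.
        rewrite vdot_scale, (Hevol u Hu), (HTn u Hu), Rmult_0_r in H. exact H.
      * exists 0. intros s Hs. exfalso; apply Hno; eauto.
    + intros (d & Hd & c & Hc).
      assert (HTd : forall u, in_open aT bT u -> vdot (TT u) d = 0).
      { intros u Hu. destruct (Hbeta u Hu) as (_&D2&_&_&_&_&_&_&_&_&_&Hk).
        pose proof (deriv_dot _ _ d u D2) as H.
        pose proof (const_deriv0 aT bT _ c u _ Hu Hc H) as H0. simpl in H0.
        rewrite vdot_scale, (Hevol u Hu) in H0.
        destruct (Rmult_integral _ _ H0); [lra|auto]. }
      destruct (classic (exists u0, in_open aT bT u0)) as [[u0 Hu0]|Hno].
      2:{ exists (0,0,0), (1,0,0), 1. split; [lra|]. split.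
          - unfold vnorm, vdot, vx, vy, vz; simpl. replace (1*1+0*0+0*0) with 1 by ring. apply sqrt_1.
          - intros s Hs. exfalso; apply Hno; eauto. }
      set (c0 := vdot (alphaT u0) d).
      assert (Hcst : forall v, in_open aT bT v -> vdot (alphaT v) d = c0).
      { intros v Hv. apply (zero_deriv_const aT bT (fun w => vdot (alphaT w) d)); auto.
        intros u Hu. destruct (HalphaT u Hu) as (D1&_).
        rewrite <- (HTd u Hu). apply deriv_dot; exact D1. }
      pose proof (vnorm1 d Hd) as Hdd.
      assert (Hsq : forall v, in_open aT bT v ->
         vdot (vsub (alphaT v) (vscale c0 d)) (vsub (alphaT v) (vscale c0 d)) = 1 - c0 * c0).
      { intros v Hv. rewrite vdot_sub_expand, Hsph, Hcst, Hdd by auto. ring. }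
      destruct (Rlt_dec 0 (1 - c0 * c0)) as [Hq|Hq].
      * exists (vscale c0 d), d, (sqrt (1 - c0 * c0)). split; [apply sqrt_lt_R0; lra|].
        split; [exact Hd|]. intros s Hs. split.
        -- unfold vnorm. rewrite Hsq by auto. reflexivity.
        -- rewrite vdot_sub_l, Hcst, vdot_scale, Hdd by auto. ring.
      * exfalso.
        assert (Heq : forall v, in_open aT bT v ->
           vx (alphaT v) = c0 * vx d /\ vy (alphaT v) = c0 * vy d /\ vz (alphaT v) = c0 * vz d).
        { intros v Hv. pose proof (Hsq v Hv) as H. revert H.
          unfold vdot, vsub, vscale, vx, vy, vz; simpl. intros H.
          set (e1 := fst (fst (alphaT v)) - c0 * fst (fst d)) in *.
          set (e2 := snd (fst (alphaT v)) - c0 * snd (fst d)) in *.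
          set (e3 := snd (alphaT v) - c0 * snd d) in *.
          assert (e1 = 0 /\ e2 = 0 /\ e3 = 0) by (repeat split; nra).
          unfold e1, e2, e3 in *. lra. }
        destruct (HalphaT u0 Hu0) as ([D1 [D2 D3]]&_&_&_&HTT&_).
        pose proof (const_deriv0 aT bT _ (c0 * vx d) u0 _ Hu0 (fun v Hv => proj1 (Heq v Hv)) D1).
        pose proof (const_deriv0 aT bT _ (c0 * vy d) u0 _ Hu0 (fun v Hv => proj1 (proj2 (Heq v Hv))) D2).
        pose proof (const_deriv0 aT bT _ (c0 * vz d) u0 _ Hu0 (fun v Hv => proj2 (proj2 (Heq v Hv))) D3).
        unfold vdot in HTT. rewrite H, H0, H1 in HTT. lra.
  - split.
    + intros [(d & Hd & c & Hc) _]. exists d. split; auto. exists c.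
      intros s Hs. rewrite Hevol by auto. auto.
    + intros (d & Hd & c & Hc). split.
      * exists d. split; auto. exists c. intros s Hs. rewrite <- Hevol by auto. auto.
      * exists (0,0,0), 1. split; [lra|]. intros s Hs.
        unfold vnorm. replace (vdot (vsub (alphaT s) (0,0,0)) (vsub (alphaT s) (0,0,0)))
          with (vdot (alphaT s) (alphaT s)) by (unfold vdot, vsub, vx, vy, vz; simpl; ring).
        rewrite Hsph by auto. apply sqrt_1.
Qed.
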